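(* If $(\gamma_0,\ldots,\gamma_{\lfloor d/2\rfloor})$ is an $f$-vector (i.e., the $f$-vector of some simplicial complex), then the $g$-vector $(g_0,\ldots,g_{\lfloor d/2\rfloor})$ is a pure $f$-vector (and hence a pure $M$-vector as well). In particular, $(h_0,\ldots,h_d)$ is an SI-sequence.
   Context: Let $(h_0,\ldots,h_d)\in\mathbb{Z}^{d+1}$ be a sequence of integers with $h_0 = 1$ and $h_i = h_{d-i}$ for each $0\leqslant i\leqslant d$. Consider the palindromic polynomial $h(x) = \sum_{i=0}^d h_i x^i$ and its $\gamma$-expansion $h(x) = \sum_{i=0}^{\lfloor d/2\rfloor} \gamma_i\, x^i(1+x)^{d-2i}$. The $g$-vector is $(g_0,\ldots,g_{\lfloor d/2\rfloor})$ with $g_0 = h_0 = 1$ and $g_i = h_i - h_{i-1}$ for $1\leqslant i\leqslant \lfloor d/2\rfloor$. A sequence is an $f$-vector if it is the $f$-vector $(f_0,f_1,\ldots)$ of a simplicial complex ($f_i$ = number of faces of cardinality $i$), and a pure $f$-vector if the complex can be taken pure; it is an $M$-vector if there is a multicomplex whose degree-$i$ monomials are counted by its $i$-th entry (pure $M$-vector if the multicomplex is pure). An SI-sequence is a sequence $(h_0,\ldots,h_d)$ with $h_0=1$, $h_i=h_{d-i}$, and whose $g$-vector is an $M$-vector. *)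

(* Defs.v *)
From HB Require Import structures.
From mathcomp Require Import all_boot all_order all_algebra.
Set Implicit Arguments. Unset Strict Implicit. Unset Printing Implicit Defensive.
Import Order.TTheory GRing.Theory Num.Theory.
Local Open Scope ring_scope.

Definition simplicial_complex (n : nat) (D : {set {set 'I_n}}) : Prop :=
  forall F G : {set 'I_n}, F \in D -> G \subset F -> G \in D.

Definition is_facet (n : nat) (D : {set {set 'I_n}}) (F : {set 'I_n}) : Prop :=
  F \in D /\ forall G : {set 'I_n}, G \in D -> F \subset G -> G = F.

Definition pure_complex (n : nat) (D : {set {set 'I_n}}) : Prop :=
  forall F G, is_facet D F -> is_facet D G -> #|F| = #|G|.

(* f_i(D) = number of faces of cardinality i; the finite sequence a is the
   f-vector of D when f_i(D) = a_i for all i (so f_i(D) = 0 beyond size a). *)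
Definition has_fvector (n : nat) (D : {set {set 'I_n}}) (a : seq int) : Prop :=
  forall i : nat, (#|[set F in D | #|F| == i]|)%:Z = a`_i.

Definition is_fvector (a : seq int) : Prop :=
  exists n (D : {set {set 'I_n}}), simplicial_complex D /\ has_fvector D a.

Definition is_pure_fvector (a : seq int) : Prop :=
  exists n (D : {set {set 'I_n}}),
    [/\ simplicial_complex D, pure_complex D & has_fvector D a].

(* A monomial in n variables with all exponents < b is a finite function
   'I_n -> 'I_b (every finite multicomplex fits for b large enough). *)
Definition mdeg (n b : nat) (m : {ffun 'I_n -> 'I_b}) : nat :=
  (\sum_(i < n) (m i : nat))%N.

Definition mdivides (n b : nat) (m' m : {ffun 'I_n -> 'I_b}) : Prop :=
  forall i, (m' i <= m i)%N.

Definition multicomplex (n b : nat) (M : {set {ffun 'I_n -> 'I_b}}) : Prop :=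
  forall m m', m \in M -> mdivides m' m -> m' \in M.

Definition is_max_monomial (n b : nat) (M : {set {ffun 'I_n -> 'I_b}})
  (m : {ffun 'I_n -> 'I_b}) : Prop :=
  m \in M /\ forall m', m' \in M -> mdivides m m' -> m' = m.

Definition pure_multicomplex (n b : nat) (M : {set {ffun 'I_n -> 'I_b}}) : Prop :=
  forall m m', is_max_monomial M m -> is_max_monomial M m' -> mdeg m = mdeg m'.

Definition has_Mvector (n b : nat) (M : {set {ffun 'I_n -> 'I_b}}) (a : seq int)
  : Prop :=
  forall i : nat, (#|[set m in M | mdeg m == i]|)%:Z = a`_i.

Definition is_Mvector (a : seq int) : Prop :=
  exists n b (M : {set {ffun 'I_n -> 'I_b}}), multicomplex M /\ has_Mvector M a.

Definition is_pure_Mvector (a : seq int) : Prop :=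
  exists n b (M : {set {ffun 'I_n -> 'I_b}}),
    [/\ multicomplex M, pure_multicomplex M & has_Mvector M a].

Definition h_poly (d : nat) (h : seq int) : {poly int} :=
  \sum_(i < d.+1) h`_i *: 'X^i.

Definition is_gamma_expansion (d : nat) (h gam : seq int) : Prop :=
  size gam = d./2.+1 /\
  h_poly d h = \sum_(i < d./2.+1) gam`_i *: ('X^i * (1 + 'X) ^+ (d - 2 * i)).

Definition gvector (d : nat) (h : seq int) : seq int :=
  [seq (if i == 0%N then h`_0 else h`_i - h`_(i.-1)) | i <- iota 0 d./2.+1].

Definition SI_sequence (d : nat) (h : seq int) : Prop :=
  [/\ size h = d.+1, h`_0 = 1,
      (forall i, (i <= d)%N -> h`_i = h`_(d - i)) & is_Mvector (gvector d h)].

(* Main.v *)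
Require Import Defs.
From HB Require Import structures.
From mathcomp Require Import all_boot all_order all_algebra.
From mathcomp Require Import zify.
Set Implicit Arguments. Unset Strict Implicit. Unset Printing Implicit Defensive.


Section Ballot.
Variable d : nat.

Definition inb (m : nat) (t : {set 'I_d}) := [forall x in t, (x < m)%N].
Definition valid (t : {set 'I_d}) :=
  [forall z : 'I_d, (2 * #|[set y in t | (y <= z)%N]| <= z + 1)%N].
Definition Kb m : {set {set 'I_d}} := locked [set t | inb m t && valid t].
Definition Nb m j := #|[set t in Kb m | #|t| == j]|.

Lemma KP m (t : {set 'I_d}) : t \in Kb m -> (forall x, x \in t -> (x < m)%N) /\
   (forall z : 'I_d, (2 * #|[set y in t | (y <= z)%N]| <= z + 1)%N).
Proof. by rewrite /Kb -lock inE => /andP[/forall_inP H /forallP H2]. Qed.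

Lemma K_intro m (t : {set 'I_d}) : (forall x, x \in t -> (x < m)%N) ->
   (forall z : 'I_d, (2 * #|[set y in t | (y <= z)%N]| <= z + 1)%N) -> t \in Kb m.
Proof. by move=> H1 H2; rewrite /Kb -lock inE; apply/andP; split; [apply/forall_inP|apply/forallP]. Qed.

Lemma K_sub m m' (t t' : {set 'I_d}) : t \in Kb m -> t' \subset t -> (m <= m')%N -> t' \in Kb m'.
Proof.
move=> /KP[H1 H2] sub le; apply: K_intro.
  by move=> x /(subsetP sub) /H1 xm; apply: leq_trans le.
move=> z; apply: leq_trans (H2 z); rewrite leq_mul2l; apply/orP; right.
apply: subset_leq_card; apply/subsetP=> y; rewrite !inE => /andP[/(subsetP sub) -> ->]//.
Qed.

Lemma K_size m (t : {set 'I_d}) : (m <= d)%N -> t \in Kb m -> (2 * #|t| <= m)%N.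
Proof.
move=> md /KP[H1 H2]; case: m md H1 => [|m] md H1.
  suff -> : t = set0 by rewrite cards0.
  by apply/setP => x; rewrite inE; apply/negbTE/negP => /H1.
have := H2 (Ordinal md); congr (_ <= _)%N; last by rewrite addn1.
congr (2 * _)%N; apply: eq_card => y; rewrite !inE /=.
by case yt: (y \in t) => //=; have := H1 _ yt.
Qed.

End Ballot.


Section B.
Variable d : nat.

Lemma K_add m (hm : (m < d)%N) (t : {set 'I_d}) :
  t \in Kb d m -> (2 * (#|t| + 1) <= m + 1)%N -> (Ordinal hm) |: t \in Kb d (m+1).
Proof.
move=> /KP[H1 H2] hs; apply: K_intro.
  move=> x; rewrite !inE => /orP[/eqP -> /=|/H1]; lia.
move=> z; case: (ltnP z m) => hz.
  apply: leq_trans (H2 z); rewrite leq_mul2l; apply/orP; right.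
  apply: subset_leq_card; apply/subsetP=> y; rewrite !inE.
  case/andP => /orP[/eqP -> /=|->] //; lia.
apply: leq_trans (_ : 2 * (#|t| + 1) <= _)%N; last by lia.
rewrite leq_mul2l; apply/orP; right.
apply: leq_trans (_ : #|Ordinal hm |: t| <= _)%N.
  by apply: subset_leq_card; apply/subsetP=> y; rewrite !inE => /andP[].
by rewrite cardsU1 addnC leq_add2l leq_b1.
Qed.

Lemma K_rem m (hm : (m < d)%N) (t : {set 'I_d}) :
  t \in Kb d (m+1) -> t :\ (Ordinal hm) \in Kb d m.
Proof.
move=> tK; have := K_sub tK (subsetDl t [set Ordinal hm]) (leqnn _).
move=> /KP[H1 H2]; apply: K_intro => // x xt.
have := H1 _ xt; move: xt; rewrite !inE => /andP[xn _].
suff : nat_of_ord x != m by lia.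
by apply: contra xn => /eqP e; apply/eqP/val_inj.
Qed.

Lemma K_notin m (hm : (m < d)%N) (t : {set 'I_d}) :
  t \in Kb d (m+1) -> Ordinal hm \notin t -> t \in Kb d m.
Proof.
move=> tK nt; suff e : t :\ Ordinal hm = t by have := K_rem hm tK; rewrite e.
by apply/setP => x; rewrite !inE; case: eqP => // ->; rewrite (negbTE nt).
Qed.

Lemma K_notm m (hm : (m < d)%N) (t : {set 'I_d}) : t \in Kb d m -> Ordinal hm \notin t.
Proof. by move=> /KP[H1 _]; apply/negP => /H1 /=; rewrite ltnn. Qed.

Lemma N0 m : Nb d m 0 = 1%N.
Proof.
rewrite /Nb (_ : [set t in Kb d m | #|t| == 0%N] = [set set0]) ?cards1 //.
apply/setP => t; rewrite !inE cards_eq0; case: eqP => [->|] /=; last by rewrite andbF.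
rewrite andbT; apply: K_intro => [x|z]; first by rewrite inE.
rewrite (_ : [set y in set0 | _] = set0) ?cards0 //.
by apply/setP=> y; rewrite !inE.
Qed.

Lemma Nrec m j (hm : (m < d)%N) :
  Nb d (m+1) j.+1 = (Nb d m j.+1 + (if (2 * j.+1 <= m + 1)%N then Nb d m j else 0))%N.
Proof.
set om := Ordinal hm.
rewrite /Nb.
have -> : [set t in Kb d (m + 1) | #|t| == j.+1] =
   [set t in Kb d m | #|t| == j.+1] :|: [set t in Kb d (m + 1) | (om \in t) && (#|t| == j.+1)].
  apply/setP => t; rewrite !inE; case tK: (t \in Kb d (m+1)); last first.
    case tK': (t \in Kb d m) => //=; by rewrite (K_sub tK' (subxx _) (leq_addr 1 m)) in tK.
  case: (boolP (om \in t)) => ot /=; first by case: (t \in Kb d m); case: (_ == _).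
  by rewrite (K_notin tK ot) orbF.
rewrite cardsU (_ : _ :&: _ = set0) ?cards0 ?subn0; last first.
  apply/setP => t; rewrite !inE; apply/negbTE/negP => /and4P[/andP[tK _] _ ot _].
  by move: ot; rewrite (negbTE (K_notm hm tK)).
congr (_ + _)%N.
case: ifP => hj; last first.
  apply/eqP; rewrite cards_eq0; apply/eqP/setP => t; rewrite !inE.
  apply/negbTE/negP => /and3P[tK _ /eqP ht].
  have : (m + 1 <= d)%N by rewrite addn1.
  move=> /K_size /(_ tK); lia.
rewrite -(@card_in_imset _ _ (fun t => t :\ om)); last first.
  move=> t1 t2; rewrite !inE => /andP[_ /andP[o1 _]] /andP[_ /andP[o2 _]] e.
  by rewrite -(setD1K o1) -(setD1K o2) e.
apply: eq_card => t; apply/imsetP/idP.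
  case=> t' ; rewrite !inE => /andP[tK /andP[ot /eqP ct]] ->.
  rewrite K_rem //= (cardsD1 om) ot in ct *; by move: ct => /= /eqP; rewrite add1n eqSS.
rewrite !inE => /andP[tK /eqP ct].
exists (om |: t); last by rewrite setU1K // K_notm.
have nt := K_notm hm tK.
rewrite !inE eqxx /= cardsU1 nt /= ct add1n eqxx andbT.
by apply: K_add => //; lia.
Qed.

End B.


Section C.
Import Order.TTheory GRing.Theory Num.Theory.
Local Open Scope ring_scope.
Variable d : nat.

Lemma Nbig m j : (m <= d)%N -> (m < 2 * j)%N -> Nb d m j = 0%N.
Proof.
move=> md mj; apply/eqP; rewrite cards_eq0; apply/eqP/setP => t; rewrite !inE.
apply/negbTE/negP => /andP[tK /eqP ht]; have := K_size md tK; lia.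
Qed.

Definition cb (m j : nat) : int :=
  if j is j'.+1 then ('C(m, j)%:Z - 'C(m, j')%:Z)%R else 1%R.

Lemma Nform m : (m <= d)%N -> forall j, (2 * j <= m + 1)%N -> (Nb d m j)%:Z = cb m j.
Proof.
elim: m => [|m IH] md [|j] hj; rewrite ?N0 //; first by lia.
have hm : (m < d)%N by [].
have [e|ne] := eqVneq (2 * j.+1)%N (m.+1 + 1)%N.
  rewrite Nbig //; last by lia.
  have -> : m.+1 = (j + j.+1)%N by lia.
  by rewrite /cb -{1}(bin_sub (leq_addr j.+1 j)) addKn subrr.
have := Nrec j hm; rewrite addn1 => ->.
rewrite ifT; last by lia.
rewrite PoszD IH ?IH //; try lia.
rewrite /cb; case: j {hj ne} => [|k].
  by rewrite !bin1 !bin0; lia.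
rewrite (binS m k.+1) (binS m k) !PoszD; lia.
Qed.

Lemma Kext m : (m <= d)%N -> forall t, t \in Kb d m -> (2 * #|t| + 2 <= m)%N ->
  exists y : 'I_d, [/\ (y < m)%N, y \notin t & y |: t \in Kb d m].
Proof.
elim: m => [|m IH] md t tK ht; first by lia.
have hm : (m < d)%N by [].
set om := Ordinal hm.
have tK' : t \in Kb d (m + 1) by rewrite addn1.
case: (boolP (om \in t)) => ot; last first.
  exists om; split => //=.
  rewrite -addn1; apply: K_add; first exact: K_notin tK' ot.
  lia.
have t'Kb := K_rem hm tK'.
have ct : #|t| = (#|t :\ om|).+1 by rewrite (cardsD1 om t) ot.
have [|y [ym yt' yK]] := IH (ltnW md) _ t'Kb.
  by rewrite ct in ht; move: ht; set c := #|t :\ om|; lia.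
have yo : y != om by apply/eqP => e; move: ym; rewrite e /= ltnn.
exists y; split; first by lia.
  by move: yt'; rewrite !inE yo.
have -> : y |: t = om |: (y |: (t :\ om)).
  by rewrite setUCA setD1K.
rewrite -addn1; apply: K_add => //.
rewrite cardsU1 yt' add1n; lia.
Qed.

End C.

Section Dsec.
Import Order.TTheory GRing.Theory Num.Theory.
Local Open Scope ring_scope.

Lemma coef1X n j : ((1 + 'X : {poly int}) ^+ n)`_j = ('C(n, j))%:R.
Proof.
elim: n j => [|n IH] j.
  by rewrite expr0 coef1 bin0n; case: j.
rewrite exprS mulrDl mul1r coefD coefXM IH; case: j => [|j] /=.
  by rewrite !bin0 addr0.
by rewrite IH binS natrD addrC.
Qed.

Lemma hcoef d h gam : is_gamma_expansion d h gam -> forall k, (k <= d)%N ->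
  h`_k = \sum_(i < d./2.+1) gam`_i * (if (i <= k)%N then ('C(d - 2 * i, k - i))%:R else 0).
Proof.
move=> [_ E] k kd.
have := congr1 (fun p : {poly int} => p`_k) E => /=.
rewrite /h_poly -poly_def coef_poly ltnS kd => ->.
rewrite coef_sum; apply: eq_bigr => i _.
rewrite coefZ coefXnM coef1X; congr (_ * _).
by rewrite ltnNge; case: (i <= k)%N.
Qed.

End Dsec.


Section E.
Variables n d : nat.
Implicit Types X : {set 'I_(n + d)}.

Definition sgm X : {set 'I_n} := [set x | @lshift n d x \in X].
Definition tau_ X : {set 'I_d} := [set y | @rshift n d y \in X].
Definition psi (p : {set 'I_n} * {set 'I_d}) : {set 'I_(n + d)} :=
  @lshift n d @: p.1 :|: @rshift n d @: p.2.

Lemma sig_psi p : sgm (psi p) = p.1.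
Proof.
apply/setP => x; rewrite !inE mem_imset; last exact: lshift_inj.
case: (x \in p.1) => //=; apply/imsetP => -[y _ /eqP]; by rewrite eq_lrshift.
Qed.

Lemma tau_psi p : tau_ (psi p) = p.2.
Proof.
apply/setP => x; rewrite !inE (mem_imset _ _ (@rshift_inj _ _)).
case: (x \in p.2); rewrite ?orbT ?orbF //; apply/imsetP => -[y _ /eqP]; by rewrite eq_sym eq_lrshift.
Qed.

Lemma psi_sig X : psi (sgm X, tau_ X) = X.
Proof.
apply/setP => z; rewrite /psi /=; case: (split_ordP z) => [j|k] ->.
  rewrite !inE mem_imset; last exact: lshift_inj.
  rewrite inE; case: (_ \in X) => //=; apply/imsetP => -[y _ /eqP]; by rewrite eq_lrshift.
rewrite !inE (mem_imset _ _ (@rshift_inj _ _)) inE.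
case: (_ \in X); rewrite ?orbT //= orbF; apply/imsetP => -[y _ /eqP]; by rewrite eq_sym eq_lrshift.
Qed.

Lemma card_psi p : #|psi p| = (#|p.1| + #|p.2|)%N.
Proof.
rewrite cardsU (card_imset _ (@lshift_inj _ _)) (card_imset _ (@rshift_inj _ _)).
suff -> : @lshift n d @: p.1 :&: @rshift n d @: p.2 = set0 by rewrite cards0 subn0.
apply/setP => z; rewrite !inE; apply/negbTE/negP => /andP[/imsetP[x _ ->] /imsetP[y _ /eqP]].
by rewrite eq_lrshift.
Qed.

Lemma psi_inj : injective psi.
Proof.
move=> [a b] [a' b'] e.
by have := congr1 (fun X => sgm X) e; have := congr1 (fun X => tau_ X) e; rewrite !sig_psi !tau_psi /= => -> ->.
Qed.

End E.


Section F.
Variables (n d : nat) (D : {set {set 'I_n}}).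
Hypothesis Dsc : simplicial_complex D.
Hypothesis Dsz : forall s, s \in D -> (2 * #|s| <= d)%N.
Implicit Types X F G : {set 'I_(n + d)}.

Definition Gam : {set {set 'I_(n + d)}} :=
  [set X | (sgm X \in D) && (tau_ X \in Kb d (d - 2 * #|sgm X|))].

Lemma GamP X : X \in Gam -> sgm X \in D /\ tau_ X \in Kb d (d - 2 * #|sgm X|).
Proof. by rewrite inE => /andP. Qed.

Lemma Gam_psi s t : (psi (s, t) \in Gam) = (s \in D) && (t \in Kb d (d - 2 * #|s|)).
Proof. by rewrite inE sig_psi tau_psi. Qed.

Lemma card_sgm X : #|X| = (#|sgm X| + #|tau_ X|)%N.
Proof. by rewrite -{1}(psi_sig X) card_psi. Qed.

Lemma Gam_sc : simplicial_complex Gam.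
Proof.
move=> F G /GamP[sF tF] GF.
have sGF : sgm G \subset sgm F.
  by apply/subsetP => x; rewrite !inE => /(subsetP GF).
have tGF : tau_ G \subset tau_ F.
  by apply/subsetP => x; rewrite !inE => /(subsetP GF).
rewrite inE (Dsc sF sGF) /=; apply: K_sub tF tGF _.
by apply: leq_sub2l; rewrite leq_mul2l subset_leq_card ?orbT.
Qed.

Lemma Gam_size X : X \in Gam -> (#|X| <= d./2)%N.
Proof.
move=> /GamP[sX tX]; have := Dsz sX; have := K_size (leq_subr _ _) tX.
rewrite card_sgm -divn2; lia.
Qed.

Lemma Gam_facet F : is_facet Gam F -> #|F| = d./2.
Proof.
move=> [FG Fmax]; have [sF tF] := GamP FG.
have := Dsz sF; have := K_size (leq_subr _ _) tF.
rewrite card_sgm -divn2.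
case: (ltnP (d - 2 * #|sgm F|) (2 * #|tau_ F| + 2)) => h; first by lia.
have [y [_ yt yK]] := Kext (leq_subr _ _) tF h.
have GG : psi (sgm F, y |: tau_ F) \in Gam by rewrite Gam_psi sF.
have FG' : F \subset psi (sgm F, y |: tau_ F).
  rewrite -{1}(psi_sig F) /psi /=; apply: setUS; apply: imsetS; exact: subsetUr.
have := Fmax _ GG FG' => /(congr1 (fun X => tau_ X)); rewrite tau_psi => e.
by move: yt; rewrite -e setU11.
Qed.

Lemma Gam_pure : pure_complex Gam.
Proof. by move=> F G /Gam_facet -> /Gam_facet ->. Qed.

Lemma Gam_count k : #|[set X in Gam | #|X| == k]| =
  (\sum_(s in D) #|[set t in Kb d (d - 2 * #|s|) | #|s| + #|t| == k]|)%N.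
Proof.
have -> : [set X in Gam | #|X| == k] =
   (@psi n d) @: [set p | [&& p.1 \in D, p.2 \in Kb d (d - 2 * #|p.1|) & #|p.1| + #|p.2| == k]].
  apply/setP => X; apply/idP/imsetP.
    rewrite !inE => /andP[/andP[sX tX] cX]; exists (sgm X, tau_ X); last by rewrite psi_sig.
    by rewrite inE /= sX tX -card_sgm.
  by case=> -[s t]; rewrite !inE /= => /and3P[sD tK c] ->; rewrite sig_psi tau_psi card_psi sD tK.
rewrite (card_imset _ (@psi_inj n d)).
transitivity (\sum_(s in D) \sum_(t | (t \in Kb d (d - 2 * #|s|)) && (#|s| + #|t| == k)) 1)%N; last first.
  by apply: eq_bigr => s _; rewrite sum1dep_card; apply: eq_card => t; rewrite !inE.
rewrite pair_big_dep /= sum1dep_card; apply: eq_card => -[s t]; by rewrite !inE.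
Qed.

End F.


Section G.
Variable Nv : nat.
Implicit Types m : {ffun 'I_Nv -> 'I_2}.

Definition supp m : {set 'I_Nv} := [set x | (m x != ord0)].
Definition chi (F : {set 'I_Nv}) : {ffun 'I_Nv -> 'I_2} := [ffun x => inord (x \in F)].

Lemma val01 (v : 'I_2) : (v : nat) = (v != ord0).
Proof. by case: v => [[|[|v]] //=]. Qed.

Lemma supp_chi F : supp (chi F) = F.
Proof.
apply/setP => x; rewrite !inE ffunE.
by case: (x \in F); rewrite -val_eqE /= inordK.
Qed.

Lemma chi_supp m : chi (supp m) = m.
Proof.
apply/ffunP => x; apply/val_inj; rewrite ffunE inE /= inordK; last by case: (_ != _).
by rewrite -val01.
Qed.

Lemma mdeg_supp m : mdeg m = #|supp m|.
Proof.
rewrite /mdeg -sum1_card [in RHS]big_mkcond /=; apply: eq_bigr => i _.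
by rewrite inE val01; case: (_ != _).
Qed.

Lemma mdiv_sub m m' : mdivides m' m <-> supp m' \subset supp m.
Proof.
split.
  move=> H; apply/subsetP => x; rewrite !inE -!val_eqE /= => h.
  have := H x; move: h; case: (m' x) => [[|[|v]] //=]; case: (m x) => [[|[|v]] //=].
move=> /subsetP H x; move: (H x); rewrite !inE -!val_eqE /=.
case: (m' x) => [[|[|v]] //=] _; case: (m x) => [[|[|v]] //=].
by move=> _ /(_ isT).
Qed.

Variable D : {set {set 'I_Nv}}.
Definition MD : {set {ffun 'I_Nv -> 'I_2}} := [set m | supp m \in D].

Lemma MD_multi : simplicial_complex D -> multicomplex MD.
Proof.
move=> sc m m'; rewrite !inE => mD /mdiv_sub sub; exact: sc mD sub.
Qed.

Lemma MD_max m : is_max_monomial MD m -> is_facet D (supp m).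
Proof.
move=> [mM mmax]; rewrite inE in mM; split => // G GD sub.
have cM : chi G \in MD by rewrite inE supp_chi.
have := mmax _ cM; move/(_ (iffRL (mdiv_sub _ _) _)); rewrite supp_chi => e.
have {e} e := e sub.
by rewrite -e supp_chi.
Qed.

Lemma MD_pure : pure_complex D -> pure_multicomplex MD.
Proof.
by move=> pc m m' /MD_max f1 /MD_max f2; rewrite !mdeg_supp; apply: pc.
Qed.

Lemma MD_vec a : has_fvector D a -> has_Mvector MD a.
Proof.
move=> H i; rewrite -H; congr (Posz _).
rewrite -(card_imset _ (can_inj chi_supp)); apply: eq_card => F.
apply/imsetP/idP.
  by case=> m; rewrite !inE => /andP[mD /eqP c] ->; rewrite mD -mdeg_supp c eqxx.
rewrite !inE => /andP[FD /eqP c]; exists (chi F); rewrite ?supp_chi //.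
by rewrite !inE supp_chi FD mdeg_supp supp_chi c eqxx.
Qed.

End G.

Lemma pure_f_M a : is_pure_fvector a -> is_pure_Mvector a.
Proof.
move=> [Nv [D [sc pc fv]]]; exists Nv, 2%N, (MD D); split.
- exact: MD_multi.
- exact: MD_pure.
- exact: MD_vec.
Qed.

Section Hsec.
Import Order.TTheory GRing.Theory Num.Theory.
Local Open Scope ring_scope.


Lemma group_sum n (Dl : {set {set 'I_n}}) B (Fn : nat -> nat) :
  (forall s, s \in Dl -> (#|s| < B.+1)%N) ->
  (\sum_(s in Dl) Fn #|s| = \sum_(i < B.+1) #|[set s in Dl | #|s| == i]| * Fn i)%N.
Proof.
move=> Hs.
rewrite (partition_big (fun s : {set 'I_n} => (inord #|s| : 'I_B.+1)) predT) //=.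
apply: eq_bigr => i _.
rewrite -sum_nat_const; apply: eq_big => s; last first.
  by move=> /andP[sD /eqP <-]; rewrite inordK // Hs.
rewrite !inE; case sD: (s \in Dl) => //=.
by rewrite -val_eqE /= inordK ?Hs.
Qed.

Lemma Fval d i k :
  (#|[set t in Kb d (d - 2 * i)%N | (i + #|t| == k)%N]|)%N =
  if (i <= k)%N then Nb d (d - 2 * i)%N (k - i)%N else 0%N.
Proof.
rewrite /Nb; case: leqP => ik.
  apply: eq_card => t; rewrite !inE; case: (_ \in _) => //=; apply/eqP/eqP; lia.
apply/eqP; rewrite cards_eq0; apply/eqP/setP => t; rewrite !inE.
apply/negbTE/negP => /andP[_ /eqP]; lia.
Qed.

Lemma term d i k : (2 * i <= d)%N -> (2 * k.+1 <= d)%N ->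
  (if (i <= k.+1)%N then Nb d (d - 2 * i)%N (k.+1 - i)%N else 0%N)%:Z =
  (if (i <= k.+1)%N then ('C(d - 2 * i, k.+1 - i))%:R else 0)
  - (if (i <= k)%N then ('C(d - 2 * i, k - i))%:R else 0).
Proof.
move=> hi hk; case: (leqP i k) => ik.
  rewrite (leqW ik) subSn // (Nform (leq_subr _ _)); last by lia.
  by rewrite /cb !natz.
case: (ltngtP i k.+1) => c; first by lia.
  by rewrite subr0.
rewrite c subnn N0 bin0 subr0.
by [].
Qed.

Lemma half_le x d : (x < d./2.+1)%N -> (2 * x <= d)%N.
Proof. rewrite -divn2; lia. Qed.

Lemma half_gt x d : (d./2 < x)%N -> (d < 2 * x)%N.
Proof. rewrite -divn2; lia. Qed.

End Hsec.

Import Order.TTheory GRing.Theory Num.Theory.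
Local Open Scope ring_scope.

Theorem proposition8p2 (d : nat) (h gam : seq int) :
  size h = d.+1 ->
  h`_0 = 1 ->
  (forall i : nat, (i <= d)%N -> h`_i = h`_(d - i)) ->
  is_gamma_expansion d h gam ->
  is_fvector gam ->
  [/\ is_pure_fvector (gvector d h), is_pure_Mvector (gvector d h)
    & SI_sequence d h].
Proof.
move=> hs h0 hsym ge [n [Dl [sc fv]]].
have sg : size gam = d./2.+1 := ge.1.
have Dsz : forall s, s \in Dl -> (#|s| < d./2.+1)%N.
  move=> s sD; rewrite ltnNge; apply/negP => hb.
  have := fv #|s|; rewrite nth_default ?sg // => -[] /eqP; rewrite cards_eq0 => /eqP e.
  have : s \in [set s0 in Dl | #|s0| == #|s|] by rewrite inE sD eqxx.
  by rewrite e inE.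
have Dsz2 : forall s, s \in Dl -> (2 * #|s| <= d)%N.
  by move=> s /Dsz; rewrite -divn2; lia.
have fvG : has_fvector (Gam d Dl) (gvector d h).
  move=> k; rewrite Gam_count.
  rewrite (@group_sum _ _ d./2 (fun i => #|[set t in Kb d (d - 2 * i)%N | (i + #|t| == k)%N]|)) //.
  rewrite (big_morph Posz PoszD (erefl _)).
  have -> : \sum_(i < d./2.+1) ((#|[set s in Dl | #|s| == i]| *
      #|[set t in Kb d (d - 2 * i)%N | (i + #|t| == k)%N]|)%N)%:Z =
      \sum_(i < d./2.+1) gam`_i * (if (i <= k)%N then Nb d (d - 2 * i) (k - i)%N else 0%N)%:Z.
    by apply: eq_bigr => i _; rewrite PoszM fv Fval.
  case: (leqP k d./2) => kd.
    rewrite /gvector (nth_map 0%N) ?size_iota ?nth_iota // add0n.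
    case: k kd => [|k] kd /=.
      rewrite (hcoef ge (leq0n d)); apply: eq_bigr => i _.
      by case: (nat_of_ord i) => [|i'] /=; rewrite ?N0 ?bin0.
    rewrite (hcoef ge) ?(hcoef ge) -?sumrB; try (rewrite -divn2 in kd; lia).
    apply: eq_bigr => i _; rewrite -mulrBr term //.
      exact: half_le.
    exact: half_le.
  rewrite nth_default ?size_map ?size_iota //.
  apply: big1 => i _; case: ifP => _; rewrite ?mulr0 // Nbig ?mulr0 ?leq_subr //.
  by have := half_le (ltn_ord i); have := half_gt kd; lia.
have pf : is_pure_fvector (gvector d h).
  by exists (n + d)%N, (Gam d Dl); split; [exact: Gam_sc | exact: Gam_pure | exact: fvG].
split => //; first exact: pure_f_M.
split => //; have [Nb' [b [M [mc _ mv]]]] := pure_f_M pf; by exists Nb', b, M.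
Qed.
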